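(* Let $R$ and $R'$ be (not necessarily commutative) subrings of a $\mathbb Q$-algebra, let $\Gamma$ be an order of a number field, let $d\ge1$ be an integer and let $\Gamma'=\mathbb Z[d\Gamma]$ be the subring of $\Gamma$ generated by $d\Gamma$. Suppose $dR'\subseteq R$ and $dR\subseteq R'$. Then the number of $\Gamma$-structures on $R$ is at most $|R'/dR'|$ times the number of $\Gamma'$-structures on $R'$.
   Context: For a ring $A$ and a ring $B$, $\operatorname{Hom}(A,B)$ is the set of ring morphisms $A\to B$; the unit group $B^\times$ acts on it by conjugation. An $A$-structure on $B$ is an element of $\operatorname{Hom}(A,B)/B^\times$. *)

(* Defs.v *)
From HB Require Import structures.
From mathcomp Require Import all_boot all_order all_algebra all_field.
From mathcomp Require Import classical_sets cardinality.
Set Implicit Arguments. Unset Strict Implicit. Unset Printing Implicit Defensive.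
Import Order.TTheory GRing.Theory.
Local Open Scope ring_scope.
Local Open Scope classical_set_scope.

Definition is_subring (T : pzRingType) (S : set T) : Prop :=
  [/\ S 1,
      (forall x y, S x -> S y -> S (x - y)) &
      (forall x y, S x -> S y -> S (x * y))].

Definition gen_subring (T : pzRingType) (X : set T) : set T :=
  fun x => forall S : set T, is_subring S -> X `<=` S -> S x.

Definition nat_mul_set (T : pzRingType) (d : nat) (X : set T) : set T :=
  [set x *+ d | x in X].

Definition is_order (K : fieldExtType rat) (G : set K) : Prop :=
  is_subring G /\
  exists s : seq K,
    (forall x, G x <-> inIntSpan (in_tuple s) x) /\ (<<s>>%VS = fullv).

(* Hom(G, R): ring morphisms G -> R, represented by functions T -> A
   whose behaviour outside G is irrelevant (it is quotiented out below). *)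
Definition ring_hom_on (T A : pzRingType) (G : set T) (R : set A)
  (f : T -> A) : Prop :=
  [/\ (forall x, G x -> R (f x)),
      f 1 = 1,
      (forall x y, G x -> G y -> f (x + y) = f x + f y) &
      (forall x y, G x -> G y -> f (x * y) = f x * f y)].

Definition conj_by_unit (T A : pzRingType) (G : set T) (R : set A)
  (f g : T -> A) : Prop :=
  exists u v, [/\ R u, R v, u * v = 1, v * u = 1 &
                  forall x, G x -> g x = u * f x * v].

(* The set of G-structures on R: Hom(G, R) / R^x, each orbit being a set. *)
Definition structures (T A : pzRingType) (G : set T) (R : set A)
  : set (set (T -> A)) :=
  [set C | exists f, ring_hom_on G R f /\
       C = [set g | ring_hom_on G R g /\ conj_by_unit G R f g]].

(* The additive quotient R / dR, as the set of its cosets. *)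
Definition quot_classes (A : pzRingType) (R : set A) (d : nat)
  : set (set A) :=
  [set C | exists a, R a /\ C = [set b | R b /\ nat_mul_set d R (b - a)]].

(* Main.v *)
Require Import Defs.
From HB Require Import structures.
From mathcomp Require Import all_boot all_order all_algebra all_field.
From mathcomp Require Import classical_sets cardinality.
From mathcomp Require Import boolp.
From Stdlib Require Import ClassicalEpsilon.
Import GRing.Theory.
Local Open Scope ring_scope.
Local Open Scope classical_set_scope.

Set Implicit Arguments.
Section Helpers.
Variables (T A : pzRingType).

Lemma sub0 (S : set T) : is_subring S -> S 0.
Proof. by case=> S1 SB _; rewrite -(subrr 1); apply: SB. Qed.

Lemma subN (S : set T) x : is_subring S -> S x -> S (- x).
Proof. move=> hS Sx; rewrite -sub0r; case: (hS) => _ SB _; apply: SB => //; exact: sub0. Qed.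

Lemma subD (S : set T) x y : is_subring S -> S x -> S y -> S (x + y).
Proof.
move=> hS Sx Sy; rewrite -[y]opprK; case: (hS) => _ SB _; apply: SB => //; exact: subN.
Qed.

Lemma subMn (S : set T) x n : is_subring S -> S x -> S (x *+ n).
Proof.
move=> hS Sx; elim: n => [|n IH]; first by rewrite mulr0n; apply: sub0.
by rewrite mulrS; apply: subD.
Qed.

Lemma hom0 (G : set T) (R : set A) f : is_subring G -> ring_hom_on G R f -> f 0 = 0.
Proof.
move=> hG [_ _ fD _]; have := fD 0 0 (sub0 hG) (sub0 hG).
by rewrite addr0 => /(congr1 (fun z => z - f 0)); rewrite subrr addrK.
Qed.

Lemma homMn (G : set T) (R : set A) f x n : is_subring G -> ring_hom_on G R f ->
  G x -> f (x *+ n) = f x *+ n.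
Proof.
move=> hG hf Gx; elim: n => [|n IH]; first by rewrite !mulr0n (hom0 hG hf).
case: hf => _ _ fD _.
by rewrite mulrS fD // ?IH ?mulrS //; apply: subMn.
Qed.

Lemma homN (G : set T) (R : set A) f x : is_subring G -> ring_hom_on G R f ->
  G x -> f (- x) = - f x.
Proof.
move=> hG hf Gx; have := hom0 hG hf; case: (hf) => _ _ fD _.
rewrite -(subrr x) fD //; last exact: subN.
by move/eqP; rewrite addr_eq0 => /eqP ->; rewrite opprK.
Qed.

Lemma homB (G : set T) (R : set A) f x y : is_subring G -> ring_hom_on G R f ->
  G x -> G y -> f (x - y) = f x - f y.
Proof.
move=> hG hf Gx Gy; case: (hf) => _ _ fD _.
by rewrite fD //; [rewrite (homN _ hG hf) | apply: subN].
Qed.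

Lemma gen_sub (G : set T) d : is_subring G -> gen_subring (nat_mul_set d G) `<=` G.
Proof.
move=> hG x; apply => //; move=> _ [y Gy <-]; exact: subMn.
Qed.

Lemma gen_in (G : set T) d x : G x -> gen_subring (nat_mul_set d G) (x *+ d).
Proof. by move=> Gx S _; apply; exists x. Qed.

Lemma hom_restr (G : set T) (R R' : set A) d f :
  is_subring G -> is_subring R' -> nat_mul_set d R `<=` R' ->
  ring_hom_on G R f -> ring_hom_on (gen_subring (nat_mul_set d G)) R' f.
Proof.
move=> hG hR' sub hf; have hf' := hf; case: hf' => fR f1 fD fM; split => //.
- move=> x Gx.
  have [] := Gx (fun z => G z /\ R' (f z)) => //.
  + split.
    * by split; [case: hG | rewrite f1; case: hR'].
    * move=> a b [Ga Ra] [Gb Rb]; split; first by case: hG => _ + _; apply.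
      by rewrite (homB _ _ hG hf) //; case: hR' => _ + _; apply.
    * move=> a b [Ga Ra] [Gb Rb]; split; first by case: hG => _ _; apply.
      by rewrite fM //; case: hR' => _ _; apply.
  + move=> _ [y Gy <-]; split; first exact: subMn.
    rewrite (homMn _ _ hG hf Gy); apply: sub; exists (f y) => //; exact: fR.
- move=> x y Gx Gy; apply: fD; [exact: (gen_sub hG Gx)|exact: (gen_sub hG Gy)].
- move=> x y Gx Gy; apply: fM; [exact: (gen_sub hG Gx)|exact: (gen_sub hG Gy)].
Qed.

Lemma conj_refl (G : set T) (R : set A) f : is_subring R -> conj_by_unit G R f f.
Proof. by case=> R1 _ _; exists 1, 1; split; rewrite ?mulr1 // => x _; rewrite mul1r mulr1. Qed.

Lemma conj_trans (G : set T) (R : set A) f g h : is_subring R ->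
  conj_by_unit G R f g -> conj_by_unit G R g h -> conj_by_unit G R f h.
Proof.
case=> _ _ RM [u [v [Ru Rv uv vu E1]]] [u' [v' [Ru' Rv' uv' vu' E2]]].
exists (u' * u), (v * v'); split; try by apply: RM.
- by rewrite -mulrA (mulrA u) uv mul1r.
- by rewrite -mulrA (mulrA v') vu' mul1r.
- by move=> x Gx; rewrite E2 // E1 // !mulrA.
Qed.

Lemma conj_sym (G : set T) (R : set A) f g :
  conj_by_unit G R f g -> conj_by_unit G R g f.
Proof.
case=> u [v [Ru Rv uv vu E]]; exists v, u; split => // x Gx.
by rewrite E // !mulrA vu mul1r -mulrA vu mulr1.
Qed.

Definition orbit (G : set T) (R : set A) f :=
  [set g | ring_hom_on G R g /\ conj_by_unit G R f g].

Lemma orbit_eq (G : set T) (R : set A) f g : is_subring R ->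
  conj_by_unit G R f g -> orbit G R f = orbit G R g.
Proof.
move=> hR c; apply/funext => h; apply/propext; split => -[hh ch]; split => //.
- exact: conj_trans (conj_sym c) ch.
- exact: conj_trans c ch.
Qed.

Definition rep (D : set (T -> A)) : T -> A :=
  epsilon (inhabits (fun _ : T => 0 : A)) D.

Lemma rep_in (D : set (T -> A)) f : D f -> D (rep D).
Proof. by move=> Df; apply: epsilon_spec; exists f. Qed.

Lemma struct_rep (G : set T) (R : set A) C : is_subring R ->
  structures G R C -> ring_hom_on G R (rep C) /\ C = orbit G R (rep C).
Proof.
move=> hR [f [hf ->]].
have [hr cr] : orbit G R f (rep (orbit G R f)).
  by apply: (@rep_in _ f); split => //; exact: conj_refl.
by split => //; apply: orbit_eq.
Qed.

End Helpers.
Unset Implicit Arguments.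
Arguments rep {T A} D.
Arguments orbit {T A} G R f.

Lemma cancel_d (A : pzRingType) (Qstr : {rmorphism rat -> A}) (d : nat) (x y : A) :
  (0 < d)%N -> x *+ d = y *+ d -> x = y.
Proof.
move=> d0 E.
have key z : z = Qstr (d%:R^-1) * (z *+ d).
  rewrite -[z *+ d]mulr_natl -[d%:R in X in _ * (X * _)](rmorph_nat Qstr) mulrA -rmorphM mulVf ?rmorph1 ?mul1r //.
  by rewrite Num.Theory.pnatr_eq0 -lt0n.
by rewrite (key x) E -key.
Qed.

Theorem proposition10p8
  (A : pzRingType) (Qstr : {rmorphism rat -> A})
  (R R' : set A) (K : fieldExtType rat) (G : set K) (d : nat) :
  is_subring R -> is_subring R' -> is_order G -> (0 < d)%N ->
  nat_mul_set d R' `<=` R -> nat_mul_set d R `<=` R' ->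
  (structures G R #<=
     quot_classes R' d `*` structures (gen_subring (nat_mul_set d G)) R')%card.
Proof.
move=> hR hR' [hG _] d0 sR sR'.
set G' := gen_subring (nat_mul_set d G).
pose qc (w : A) := [set b | R' b /\ nat_mul_set d R' (b - w)].
have ex : forall C : set_type (structures G R),
  exists p : set_type (quot_classes R' d `*` structures G' R'),
    exists w w', [/\ R' w, R' w', w * w' = 1 /\ w' * w = 1, (val p).1 = qc w &
       forall x, G' x -> rep (val C) x = w * rep (val p).2 x * w'].
  move=> [C /set_mem SC] /=.
  have [hf _] := struct_rep hR SC.
  set f := rep C in hf *.
  have hf' := hom_restr hG hR' sR' hf.
  have [hh [u [v [Ru Rv uv vu E]]]] : orbit G' R' f (rep (orbit G' R' f)).
    by apply: (@rep_in _ _ _ f); split => //; exact: conj_refl.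
  have Hp : (quot_classes R' d `*` structures G' R') (qc v, orbit G' R' f).
    split; first by exists v.
    by exists f.
  exists (exist _ (qc v, orbit G' R' f) (mem_set Hp)), v, u; split => //= x Gx.
  by rewrite E // !mulrA vu mul1r -mulrA vu mulr1.
apply/asboolP; apply/injfunPex.
exists (fun C => projT1 (cid (ex C))) => //.
move=> C1 C2 _ _ E.
case: (projT2 (cid (ex C1))) => w1 [w1' [R1 R1' [e1 e1'] q1 F1]].
case: (projT2 (cid (ex C2))) => w2 [w2' [R2 R2' [e2 e2'] q2 F2]].
rewrite E in q1 F1.
move: (projT1 (cid (ex C2))) q1 F1 q2 F2 => p q1 F1 q2 F2; clear E.
set h := rep (val p).2 in F1 F2.
apply: val_inj.
case: C1 F1 => C1 /set_mem S1 /= F1; case: C2 F2 => C2 /set_mem S2 /= F2.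
have [hf1 ->] := struct_rep hR S1; have [hf2 ->] := struct_rep hR S2.
apply: orbit_eq => //.
have : qc w1 w2 by rewrite -q1 q2; split => //; exists 0; [exact: sub0 | by rewrite subrr mul0rn].
move=> [_ [r Rr rE]].
case: (hR) => Rone RB RM.
case: (hR') => _ _ RM'.
exists (w2 * w1'), (w1 * w2'); split.
- have -> : w2 * w1' = 1 + (r * w1') *+ d.
    by rewrite -mulrnAl rE mulrBl e1 addrC subrK.
  apply: subD => //; apply: sR; exists (r * w1') => //; exact: RM'.
- have -> : w1 * w2' = 1 - (r * w2') *+ d.
    by rewrite -mulrnAl rE mulrBl e2 opprB addrC subrK.
  apply: RB => //; apply: sR; exists (r * w2') => //; exact: RM'.
- by rewrite mulrA -(mulrA w2) e1' mulr1 e2.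
- by rewrite mulrA -(mulrA w1) e2' mulr1 e1.
- move=> x Gx; apply: (cancel_d _ Qstr d _ _ d0).
  have Gx' : G' (x *+ d) by apply: gen_in.
  rewrite -(homMn _ _ hG hf2 Gx) F2 // -mulrnAl -mulrnAr.
  rewrite -(homMn _ _ hG hf1 Gx) F1 //.
  by rewrite -!mulrA !(mulrA w1' w1) e1' !mul1r.
Qed.
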